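(* Let $3/2<s<3$ and $M\ge0$. There exists $C_s>0$ such that for every integer $N\ge1$ and every mean-zero divergence-free field $u$ on $\mathbb T^3$ with $\|u\|_{H^s}\le M$, and every orbit $\alpha\in\mathcal O_N$ with representative $k_\alpha$, \[ \sum_{\beta\in\mathcal O_N}|M_{\alpha\beta}(u)|\le C_sM^3\bigl(|k_\alpha|^{2-s}+|k_\alpha|^{6-3s}\bigr). \] Consequently \[ \sup_{\alpha\in\mathcal O_N}\sum_{\beta\in\mathcal O_N}|M_{\alpha\beta}(u)|\le\begin{cases}C_sM^3,&2<s<3,\\ C_sM^3N^{6-3s},&3/2<s\le2.\end{cases} \]
   Context: $\mathbb T^3=[0,2\pi]^3$; $u(x)=\sum_{k\ne0}\hat u_ke^{ik\cdot x}$, $\hat u_k\in\mathbb C^3$, divergence-free meaning $k\cdot\hat u_k=0$, reality $\hat u_{-k}=\overline{\hat u_k}$, and $\|u\|_{H^s}^2:=\sum_{k\ne0}|k|^{2s}|\hat u_k|^2$ ($|\cdot|$ Euclidean). $\Lambda_N:=\{k\in\mathbb Z^3\setminus\{0\}:|k|_\infty\le N\}$; $O_h$ is the group of 48 signed coordinate permutations, $\mathcal O_N:=\Lambda_N/O_h$, $|\alpha|$ the orbit cardinality. $P(k):=I-\frac{k\otimes k}{|k|^2}$; for $a,b\in\mathbb C^3$, $a\cdot b:=\sum_ja_jb_j$. \[ M_{\alpha\beta}(u):=\frac{1}{|\alpha|}\sum_{k\in\alpha}\sum_{\substack{p\in\beta\\ q=k-p\in\Lambda_N}}|k|^2\,\mathrm{Re}\Bigl(\overline{\hat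 u_k}\cdot\bigl[-iP(k)\bigl(q(\hat u_p\cdot\hat u_q)\bigr)\bigr]\Bigr). \] *)

(* Defs.v *)
From HB Require Import structures.
From mathcomp Require Import all_boot all_order all_algebra.
From mathcomp Require Import fingroup perm.
From mathcomp Require Import finmap.
From mathcomp Require Import complex.
From mathcomp Require Import all_classical all_reals all_analysis.
Set Implicit Arguments. Unset Strict Implicit. Unset Printing Implicit Defensive.
Import Order.TTheory GRing.Theory Num.Theory.
Local Open Scope ring_scope.
Local Open Scope fset_scope.

Definition vec := {ffun 'I_3 -> int}.

Definition normsq (k : vec) : int := \sum_(j < 3) k j ^+ 2.
Definition knorm (R : realType) (k : vec) : R := Num.sqrt ((normsq k)%:~R).

(** Lambda_N = { k in Z^3 \ {0} : |k|_oo <= N }, built by enumerating the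
    box {-N,...,N}^3 (coordinate c - N with c in {0,...,2N}) and removing 0. *)
Definition box (N : nat) : {fset vec} :=
  [fset [ffun j => ((c j : nat)%:Z - N%:Z)%R] | c : {ffun 'I_3 -> 'I_(2 * N + 1)} in enum {ffun 'I_3 -> 'I_(2 * N + 1)}].
Definition LamN (N : nat) : {fset vec} := [fset k in box N | k != 0].

(** The octahedral group O_h of the 48 signed coordinate permutations:
    g = (sigma, eps) acts by (g k)_j = (-1)^(eps j) k_(sigma j). *)
Notation Oh := (prod {perm 'I_3} {ffun 'I_3 -> bool}).
Definition Oh_act (g : Oh) (k : vec) : vec :=
  [ffun j => ((-1) ^+ (g.2 j) * k (g.1 j))%R].

(** The O_h-orbit of k and the orbit space O_N = Lambda_N / O_h
    (each orbit represented by the finite set of its elements). *)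
Definition orbit (k : vec) : {fset vec} := [fset Oh_act g k | g : Oh in enum {: Oh}].
Definition OrbN (N : nat) : {fset {fset vec}} := [fset orbit k | k in LamN N].

(** Fourier coefficients of a vector field: k |-> \hat u_k in C^3. *)
Definition field (R : realType) := vec -> 'I_3 -> R[i].

Definition dotc (R : realType) (a b : 'I_3 -> R[i]) : R[i] :=
  \sum_(j < 3) a j * b j.

Definition mean_zero (R : realType) (u : field R) : Prop := forall j, u 0 j = 0.
Definition div_free (R : realType) (u : field R) : Prop :=
  forall k : vec, dotc (fun j => (k j)%:~R) (u k) = 0.
Definition reality (R : realType) (u : field R) : Prop :=
  forall (k : vec) j, u (- k) j = conjc (u k j).

Definition cnormsq (R : realType) (a : 'I_3 -> R[i]) : R :=
  \sum_(j < 3) (complex.Re (a j) ^+ 2 + complex.Im (a j) ^+ 2).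
Definition Hs_normsq (R : realType) (s : R) (u : field R) : \bar R :=
  (\esum_(k in [set k : vec | k != 0%R]) ((knorm R k) `^ (2 * s) * cnormsq (u k))%:E)%E.

Definition leray (R : realType) (k : vec) (w : 'I_3 -> R[i]) : 'I_3 -> R[i] :=
  fun j => w j - (k j)%:~R * dotc (fun l => (k l)%:~R) w / (normsq k)%:~R.

Definition Mterm (R : realType) (u : field R) (k p q : vec) : R :=
  (normsq k)%:~R *
  complex.Re (dotc (fun j => conjc (u k j))
    (fun j => - (Complex 0 1) *
       leray k (fun l => (q l)%:~R * dotc (u p) (u q)) j)).

Definition Mab (R : realType) (N : nat) (u : field R) (a b : {fset vec}) : R :=
  (#|` a|%:R)^-1 *
  \sum_(k <- a) \sum_(p <- b | (k - p) \in LamN N) Mterm u k p (k - p).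

(* Main.v *)
Require Import Defs.
From HB Require Import structures.
From mathcomp Require Import all_boot all_order all_algebra.
From mathcomp Require Import fingroup perm finmap complex.
From mathcomp Require Import all_classical all_reals all_analysis.
From mathcomp Require Import ring lra zify.
Import Order.TTheory GRing.Theory Num.Theory.
Local Open Scope ring_scope.
Local Open Scope fset_scope.
Definition Oh_comp (g h : Oh) : Oh := ((g.1 * h.1)%g, [ffun j => g.2 j (+) h.2 (g.1 j)]).
Lemma Oh_actM g h k : Oh_act g (Oh_act h k) = Oh_act (Oh_comp g h) k.
Proof.
apply/ffunP => j; rewrite !ffunE /= permM signr_addb; ring.
Qed.
Definition Oh_inv (g : Oh) : Oh := ((g.1^-1)%g, [ffun j => g.2 ((g.1^-1)%g j)]).
Lemma Oh_actK g k : Oh_act (Oh_inv g) (Oh_act g k) = k.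
Proof.
apply/ffunP => j; rewrite !ffunE /= permKV mulrA -signr_addb addbb; ring.
Qed.
Lemma mem_orbit k x : (x \in Defs.orbit k) = [exists g : Oh, x == Oh_act g k].
Proof.
apply/imfsetP/existsP => [[g _ ->]|[g /eqP ->]]; first by exists g.
by exists g => //; rewrite mem_enum.
Qed.
Lemma orbit_act g k : Defs.orbit (Oh_act g k) = Defs.orbit k.
Proof.
apply/fsetP => x; rewrite !mem_orbit; apply/existsP/existsP => [[h /eqP ->]|[h /eqP ->]].
  by exists (Oh_comp h g); rewrite Oh_actM.
by exists (Oh_comp h (Oh_inv g)); rewrite -Oh_actM Oh_actK.
Qed.
Lemma orbit_eq k x : x \in Defs.orbit k -> Defs.orbit x = Defs.orbit k.
Proof. by rewrite mem_orbit => /existsP [g /eqP ->]; rewrite orbit_act. Qed.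
Lemma normsq_act g k : normsq (Oh_act g k) = normsq k.
Proof.
rewrite /normsq [RHS](reindex_inj (@perm_inj _ g.1)) /=; apply: eq_bigr => j _.
by rewrite ffunE exprMn sqrr_sign mul1r.
Qed.
Lemma normsq_ge0 k : 0 <= normsq k.
Proof. by apply: sumr_ge0 => j _; rewrite sqr_ge0. Qed.
Lemma normsq_eq0 k : (normsq k == 0) = (k == 0).
Proof.
apply/idP/idP => [/eqP h|/eqP ->]; last first.
  by rewrite /normsq big1 // => j _; rewrite ffunE expr0n.
have := h; rewrite /normsq => /eqP; rewrite psumr_eq0 => [/allP H|j _]; last by rewrite sqr_ge0.
apply/eqP/ffunP => j; rewrite ffunE; apply/eqP; rewrite -sqrf_eq0.
by apply: (implyP (H j (mem_index_enum j))).
Qed.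
Lemma sum_disj (R : realType) (g : vec -> R) (F : seq {fset vec}) (V : {fset vec}) :
  uniq F ->
  (forall b1 b2 x, b1 \in F -> b2 \in F -> x \in b1 -> x \in b2 -> b1 = b2) ->
  (forall b x, b \in F -> x \in b -> x \in V) -> (forall x, 0 <= g x) ->
  \sum_(b <- F) \sum_(x <- b) g x <= \sum_(x <- V) g x.
Proof.
elim: F V => [|b F IH] V /=; first by rewrite big_nil => _ _ _ g0; apply: sumr_ge0.
move=> /andP[bF uF] disj sub g0; rewrite big_cons [X in _ <= X](big_fsetID _ (mem b)) /=.
apply: lerD.
  rewrite le_eqVlt; apply/orP; left; apply/eqP; apply: eq_fbigl => x.
  rewrite !inE /=; apply/idP/andP => [xb|[]//]; split=> //.
  by apply: (sub b) => //; rewrite inE eqxx.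
apply: IH => //.
- by move=> b1 b2 x h1 h2; apply: disj; rewrite inE ?h1 ?h2 orbT.
- move=> b' x b'F xb'; rewrite !inE /=; apply/andP; split.
    by apply: (sub b') => //; rewrite inE b'F orbT.
  apply/negP => xb; have E : b' = b.
    by apply: (disj b' b x) => //; rewrite inE ?b'F ?eqxx ?orbT.
  by move: bF; rewrite -E b'F.
Qed.
Lemma esum_seq_le (R : realType) (s : R) (u : field R) (M : R) (l : seq vec) :
  (Hs_normsq s u <= (M ^+ 2)%:E)%E -> uniq l -> all (fun k => k != 0) l ->
  \sum_(k <- l) (knorm R k `^ (2 * s) * cnormsq (u k)) <= M ^+ 2.
Proof.
move=> H ul al; rewrite -lee_fin; apply: le_trans H.
rewrite /Hs_normsq; apply: esum_ge; exists [set` l]%classic.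
  split; first exact: finite_seq.
  by move=> x /= xl; have /allP := al; move/(_ x xl).
by rewrite -fsbig_seq // sumEFin.
Qed.
Local Notation nc := Normc.normc.
Section A.
Variable R : realType.
Implicit Types (z : R[i]).

Lemma nc_ge0 z : 0 <= nc z. Proof. by case: z => a b /=; exact: sqrtr_ge0. Qed.
Lemma nc_conj z : nc (conjc z) = nc z. Proof. by case: z => a b /=; rewrite sqrrN. Qed.
Lemma nc_int (n : int) : nc (n%:~R : R[i]) = `|(n%:~R : R)|.
Proof.
rewrite -(rmorph_int (real_complex R)) /= expr0n /= addr0; exact: sqrtr_sqr.
Qed.
Lemma Re_miN z : `|complex.Re (- 'i%C * z)| <= nc z.
Proof.
case: z => a b /=; rewrite (_ : - 0 * a - -1 * b = b); last by ring.
rewrite -sqrtr_sqr ler_sqrt ?addr_ge0 ?sqr_ge0 //. have := sqr_ge0 a; lra.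
Qed.
Lemma nc_sum3 (f : 'I_3 -> R[i]) c : (forall j, nc (f j) <= c) -> nc (\sum_j f j) <= 3 * c.
Proof.
move=> H; rewrite !big_ord_recr big_ord0 /= add0r.
apply: le_trans (le_normcD _ _) _; rewrite (_ : 3 * c = ((c + c) + c)%R); last by ring.
apply: lerD => //; apply: le_trans (le_normcD _ _) _; exact: lerD.
Qed.
Lemma nc_le_cn (a : 'I_3 -> R[i]) j : nc (a j) <= Num.sqrt (cnormsq a).
Proof.
case E: (a j) => [x y] /=; rewrite ler_sqrt; last first.
  by apply: sumr_ge0 => i _; rewrite addr_ge0 ?sqr_ge0.
by rewrite /cnormsq (bigD1 j) //= E lerDl; apply: sumr_ge0 => i _; rewrite addr_ge0 ?sqr_ge0.
Qed.
Lemma cn_ge0 (a : 'I_3 -> R[i]) : 0 <= cnormsq a.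
Proof. by apply: sumr_ge0 => i _; rewrite addr_ge0 ?sqr_ge0. Qed.
Lemma comp_le_knorm (q : vec) j : `|((q j)%:~R : R)| <= knorm R q.
Proof.
rewrite -sqrtr_sqr /knorm ler_sqrt; last by rewrite ler0z normsq_ge0.
by rewrite -rmorphXn ler_int /normsq (bigD1 j) //= lerDl sumr_ge0 // => i _; rewrite sqr_ge0.
Qed.
Lemma key3 (c w kk : 'I_3 -> R[i]) (D n : R[i]) :
  \sum_j c j * (- 'i%C * (w j - kk j * D / n)) =
  (- 'i%C * (\sum_j c j * w j) + 'i%C * (D / n) * (\sum_j c j * kk j))%R.
Proof. rewrite !big_ord_recr !big_ord0 /=; ring. Qed.

Lemma Mterm_bound (u : field R) k p q : div_free u ->
  `|Mterm u k p q| <= (normsq k)%:~R * (3 * (Num.sqrt (cnormsq (u k)) *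
     (knorm R q * (3 * (Num.sqrt (cnormsq (u p)) * Num.sqrt (cnormsq (u q))))))).
Proof.
move=> hdf.
have h0 : \sum_j conjc (u k j) * (k j)%:~R = 0.
  have := hdf k; move/(congr1 conjc); rewrite conjc0 /dotc rmorph_sum => H; apply: eq_trans H; apply: eq_bigr => j _.
  by rewrite rmorphM rmorph_int mulrC.
rewrite /Mterm /dotc /leray key3 h0 mulr0 addr0 normrM ger0_norm; last first.
  by rewrite ler0z normsq_ge0.
apply: ler_wpM2l; first by rewrite ler0z normsq_ge0.
apply: le_trans (Re_miN _) _; apply: nc_sum3 => j.
rewrite !Normc.normcM nc_conj.
apply: ler_pM; rewrite ?nc_ge0 ?nc_le_cn //; first by rewrite mulr_ge0 ?nc_ge0.
apply: ler_pM; rewrite ?nc_ge0 //; first by rewrite nc_int comp_le_knorm.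
apply: nc_sum3 => l; rewrite Normc.normcM.
by apply: ler_pM; rewrite ?nc_ge0 ?nc_le_cn.
Qed.
Lemma knorm_ge1 x : x != 0 -> 1 <= knorm R x.
Proof.
move=> x0; have h1 : 1 <= normsq x.
  have := normsq_ge0 x; rewrite -normsq_eq0 in x0; move: x0; move: (normsq x) => n; lia.
rewrite /knorm -[X in X <= _]sqrtr1 ler_sqrt ?ler1z //. have := normsq_ge0 x; rewrite -(ler0z R); exact.
Qed.
Lemma knorm_ge0 x : 0 <= knorm R x. Proof. exact: sqrtr_ge0. Qed.

Definition FF (s : R) (u : field R) x := knorm R x `^ (2 * s) * cnormsq (u x).
Lemma FF_ge0 s u x : 0 <= FF s u x.
Proof. by rewrite mulr_ge0 ?powR_ge0 ?cn_ge0. Qed.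

Lemma FF_sq s u x : FF s u x = (knorm R x `^ s * Num.sqrt (cnormsq (u x))) ^+ 2.
Proof.
rewrite /FF exprMn sqr_sqrtr ?cn_ge0 // (mulrC 2 s) powRrM powR_mulrn //.
exact: powR_ge0.
Qed.

Lemma pair_bd s u p q : 1 <= s -> p != 0 -> q != 0 ->
  Num.sqrt (cnormsq (u p)) * Num.sqrt (cnormsq (u q)) * knorm R q <= (FF s u p + FF s u q) / 2.
Proof.
move=> s1 p0 q0; rewrite !FF_sq.
have P1 := knorm_ge1 _ p0; have Q1 := knorm_ge1 _ q0.
have hP : 1 <= knorm R p `^ s by apply: le_trans (le1r_powR P1 s1).
have hQ : knorm R q <= knorm R q `^ s by apply: le1r_powR.
have x0 := sqrtr_ge0 (cnormsq (u p)); have y0 := sqrtr_ge0 (cnormsq (u q)).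
move: hP hQ x0 y0 Q1; set x := Num.sqrt _; set y := Num.sqrt _.
set Ps := knorm R p `^ s; set Qs := knorm R q `^ s; set Q := knorm R q => hP hQ x0 y0 Q1.
have h1 : x * y * Q <= (Ps * x) * (Qs * y).
  rewrite (_ : Ps * x * (Qs * y) = (x * y) * (Ps * Qs)); last by ring.
  apply: ler_wpM2l; first by rewrite mulr_ge0.
  by rewrite -[Q]mul1r; apply: ler_pM => //; lra.
apply: le_trans h1 _; have := sqr_ge0 (Ps * x - Qs * y); nra.
Qed.
End A.
Arguments FF {R}.

Lemma LamN_neq0 N q : q \in LamN N -> q != 0.
Proof. by rewrite !inE => /andP[_ ->]. Qed.

Section B.
Variable R : realType.

Lemma sum_pq (s : R) (u : field R) M N (k : vec) (l : seq vec) : 1 <= s ->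
  (Hs_normsq s u <= (M ^+ 2)%:E)%E -> uniq l -> all (fun p => p != 0) l ->
  \sum_(p <- l | k - p \in LamN N)
     (Num.sqrt (cnormsq (u p)) * Num.sqrt (cnormsq (u (k - p))) * knorm R (k - p)) <= M ^+ 2.
Proof.
move=> s1 HM ul al.
have step : \sum_(p <- l | k - p \in LamN N)
     (Num.sqrt (cnormsq (u p)) * Num.sqrt (cnormsq (u (k - p))) * knorm R (k - p)) <=
   \sum_(p <- l | k - p \in LamN N) ((FF s u p + FF s u (k - p))%R / 2).
  rewrite big_seq_cond [X in _ <= X]big_seq_cond; apply: ler_sum => p /andP[pl hq].
  apply: pair_bd => //; first by move/allP: al => /(_ p pl).
  exact: LamN_neq0 hq.
apply: le_trans step _.
rewrite -big_filter -mulr_suml big_split /=.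
set l' := seq.filter _ l.
have ul' : uniq l' by rewrite filter_uniq.
have h1 : \sum_(p <- l') FF s u p <= M ^+ 2.
  apply: esum_seq_le => //; apply/allP => p; rewrite mem_filter => /andP[_ pl].
  by move/allP: al => /(_ p pl).
have h2 : \sum_(p <- l') FF s u (k - p) <= M ^+ 2.
  rewrite -(big_map (fun p => k - p) xpredT (FF s u)).
  apply: esum_seq_le => //.
    by rewrite map_inj_uniq // => x y /addrI /oppr_inj.
  apply/allP => q /mapP [p]; rewrite mem_filter => /andP[hq _] ->.
  exact: LamN_neq0 hq.
move: h1 h2; set A := \sum_(p <- l') _; set B := \sum_(p <- l') _ => h1 h2.
lra.
Qed.

Lemma k_bound (s : R) (u : field R) M N (k : vec) (U : seq vec) : 1 <= s -> 0 <= M ->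
  div_free u -> (Hs_normsq s u <= (M ^+ 2)%:E)%E -> k != 0 ->
  uniq U -> all (fun p => p != 0) U ->
  \sum_(p <- U | k - p \in LamN N) `|Mterm u k p (k - p)| <= 9 * M ^+ 3 * knorm R k `^ (2 - s).
Proof.
move=> s1 M0 hdf HM k0 uU aU.
have K1 := knorm_ge1 R _ k0.
set K := knorm R k in K1 *; set b := Num.sqrt (cnormsq (u k)).
have b0 : 0 <= b by exact: sqrtr_ge0.
have hb : K `^ s * b <= M.
  have := @esum_seq_le R s u M [:: k] HM erefl; rewrite /= k0 big_seq1 => /(_ erefl).
  rewrite -/(FF s u k) FF_sq -/K -/b => h.
  have : 0 <= K `^ s * b by rewrite mulr_ge0 ?powR_ge0.
  move: h; set Y := K `^ s * b => h Y0; nra.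
have hn : (normsq k)%:~R = K ^+ 2 :> R.
  rewrite /K /knorm sqr_sqrtr //. by have := normsq_ge0 k; rewrite -(ler0z R).
have hK : K ^+ 2 = K `^ (2 - s) * K `^ s.
  rewrite -powRD; first by rewrite subrK -[2 in RHS]/(2%:R) powR_mulrn // (le_trans _ K1).
  by apply/implyP => _; rewrite gt_eqF // (lt_le_trans _ K1).
have step : \sum_(p <- U | k - p \in LamN N) `|Mterm u k p (k - p)| <=
  \sum_(p <- U | k - p \in LamN N) ((normsq k)%:~R * (3 * (b * (knorm R (k - p) * (3 * (Num.sqrt (cnormsq (u p)) *
     Num.sqrt (cnormsq (u (k - p))))))))).
  by apply: ler_sum => p _; exact: Mterm_bound.
apply: le_trans step _.
have e : forall p, (normsq k)%:~R * (3 * (b * (knorm R (k - p) * (3 * (Num.sqrt (cnormsq (u p)) *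
     Num.sqrt (cnormsq (u (k - p)))))))) = (9 * K ^+ 2 * b) * (Num.sqrt (cnormsq (u p)) *
     Num.sqrt (cnormsq (u (k - p))) * knorm R (k - p)).
  by move=> p; rewrite hn; ring.
under eq_bigr do rewrite e.
rewrite -mulr_sumr.
apply: le_trans (ler_wpM2l _ (@sum_pq s u M N k U s1 HM uU aU)) _.
  by apply: mulr_ge0 => //; apply: mulr_ge0 => //; exact: sqr_ge0.
rewrite hK.
have X0 : 0 <= K `^ (2 - s) by exact: powR_ge0.
move: hb X0; set X := K `^ (2 - s); set Z := K `^ s => hb X0.
rewrite (_ : 9 * (X * Z) * b * M ^+ 2 = 9 * X * M ^+ 2 * (Z * b)); last by ring.
rewrite (_ : 9 * M ^+ 3 * X = 9 * X * M ^+ 2 * M); last by ring.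
by apply: ler_wpM2l => //; rewrite !mulr_ge0 // sqr_ge0.
Qed.
End B.
Lemma OrbN_mem N a : a \in OrbN N -> exists2 k0, k0 \in LamN N & a = Defs.orbit k0.
Proof. by move/imfsetP => [k0 h ->]; exists k0. Qed.

Lemma orbit_normsq N a x : a \in OrbN N -> x \in a ->
  exists2 k0, k0 \in LamN N & normsq x = normsq k0.
Proof.
move=> /OrbN_mem [k0 hk ->]; rewrite mem_orbit => /existsP [g /eqP ->].
by exists k0 => //; rewrite normsq_act.
Qed.

Lemma orbit_nz N a x : a \in OrbN N -> x \in a -> x != 0.
Proof.
move=> ha hx; have [k0 hk e] := orbit_normsq _ _ _ ha hx.
by rewrite -normsq_eq0 e normsq_eq0; exact: LamN_neq0 hk.
Qed.

Lemma orbit_same N a x y : a \in OrbN N -> x \in a -> y \in a -> normsq x = normsq y.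
Proof.
move=> /OrbN_mem [k0 hk ->]; rewrite !mem_orbit => /existsP [g /eqP ->] /existsP [h /eqP ->].
by rewrite !normsq_act.
Qed.

Lemma OrbN_disj N b1 b2 x : b1 \in OrbN N -> b2 \in OrbN N -> x \in b1 -> x \in b2 -> b1 = b2.
Proof.
move=> /OrbN_mem [k1 _ ->] /OrbN_mem [k2 _ ->] h1 h2.
by rewrite -(orbit_eq _ _ h1) (orbit_eq _ _ h2).
Qed.

Lemma box_normsq N k : k \in box N -> normsq k <= (2 * N%:Z) ^+ 2.
Proof.
move/imfsetP => [c _ ->].
have hj : forall j, ([ffun j => ((c j : nat)%:Z - N%:Z)%R] j) ^+ 2 <= N%:Z ^+ 2.
  move=> j; rewrite ffunE; have := ltn_ord (c j); move: (c j : nat) => x hx.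
  rewrite !expr2; nia.
have : normsq [ffun j => ((c j : nat)%:Z - N%:Z)%R] <= \sum_(j < 3) N%:Z ^+ 2.
  by apply: ler_sum => j _; exact: hj j.
move=> /le_trans; apply.
rewrite sumr_const card_ord -mulr_natr !expr2; nia.
Qed.
Lemma knorm_le (R : realType) N a x : a \in OrbN N -> x \in a -> knorm R x <= 2 * N%:R.
Proof.
move=> ha hx; have [k0 hk e] := orbit_normsq _ _ _ ha hx.
move: hk; rewrite !inE => /andP[/box_normsq hb _]; rewrite -e in hb.
have h2 : ((normsq x)%:~R : R) <= (2 * N%:R) ^+ 2.
  by move: hb; rewrite -(ler_int R) rmorphXn rmorphM /=.
rewrite /knorm -[X in _ <= X]ger0_norm ?mulr_ge0 ?ler0n // -sqrtr_sqr ler_sqrt //.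
Qed.
Lemma core (R : realType) (s : R) (u : field R) M N a ka : 1 <= s -> 0 <= M ->
  div_free u -> (Hs_normsq s u <= (M ^+ 2)%:E)%E -> a \in OrbN N -> ka \in a ->
  \sum_(b <- OrbN N) `|Mab N u a b| <= 9 * M ^+ 3 * knorm R ka `^ (2 - s).
Proof.
move=> s1 M0 hdf HM ha hka.
set U := \bigcup_(b <- OrbN N) b.
set c := 9 * M ^+ 3 * knorm R ka `^ (2 - s).
set g := fun k p => if k - p \in LamN N then `|Mterm u k p (k - p)| else 0.
have g0 : forall k p, 0 <= g k p by move=> k p; rewrite /g; case: ifP.
have hU0 : all (fun p => p != 0) U.
  apply/allP => p /bigfcupP [b /andP[hb _] hp]; exact: orbit_nz hb hp.
have hi0 : 0 <= (#|` a|%:R : R)^-1 by rewrite invr_ge0 ler0n.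
have step1 : forall b, `|Mab N u a b| <= (#|` a|%:R)^-1 * \sum_(k <- a) \sum_(p <- b) g k p.
  move=> b; rewrite /Mab normrM ger0_norm //; apply: ler_wpM2l => //.
  apply: le_trans (ler_norm_sum _ _ _) _; apply: ler_sum => k _.
  apply: le_trans (ler_norm_sum _ _ _) _; rewrite big_mkcond /=.
  by apply: ler_sum => p _; rewrite /g; case: ifP.
have step2 : forall k, k \in a -> \sum_(b <- OrbN N) \sum_(p <- b) g k p <= c.
  move=> k hk.
  have hsub : forall b x, b \in OrbN N -> x \in b -> x \in U.
    by move=> b x hb hx; apply/bigfcupP; exists b => //; rewrite hb.
  apply: le_trans (@sum_disj R (g k) (OrbN N) U (fset_uniq _) (OrbN_disj N) hsub (g0 k)) _.
  rewrite /g -big_mkcond /=.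
  have := @k_bound R s u M N k U s1 M0 hdf HM (orbit_nz _ _ _ ha hk) (fset_uniq U) hU0.
  by rewrite /c /knorm (orbit_same _ _ _ _ ha hk hka).
have := ler_sum (OrbN N) (fun b (_ : true) => step1 b).
move=> /le_trans; apply.
rewrite -mulr_sumr exchange_big /=.
have h3 : \sum_(k <- a) \sum_(b <- OrbN N) \sum_(p <- b) g k p <= \sum_(k <- a) c.
  by rewrite big_seq [X in _ <= X]big_seq; apply: ler_sum => k hk; exact: step2.
apply: le_trans (ler_wpM2l hi0 h3) _.
have hcard : \sum_(k <- a) c = #|` a|%:R * c.
  by rewrite card_fset_sum1 natr_sum mulr_suml; apply: eq_bigr => _ _; rewrite mul1r.
rewrite hcard mulrA mulVf ?mul1r // pnatr_eq0 cardfs_eq0; apply/eqP => a0.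
by move: hka; rewrite a0 inE.
Qed.
Lemma mem_orbit_self k : k \in Defs.orbit k.
Proof.
rewrite mem_orbit; apply/existsP; exists (1%g, [ffun => false]); apply/eqP/ffunP => j.
by rewrite !ffunE perm1 expr0 mul1r.
Qed.

Theorem theorem6p4 (R : realType) (s : R) :
  3 / 2 < s < 3 ->
  exists C : R, 0 < C /\
  forall (M : R), 0 <= M ->
  forall (N : nat), (1 <= N)%N ->
  forall u : field R,
    mean_zero u -> div_free u -> reality u ->
    (Hs_normsq s u <= (M ^+ 2)%:E)%E ->
    (forall (a : {fset vec}), a \in OrbN N -> forall ka : vec, ka \in a ->
       \sum_(b <- OrbN N) `|Mab N u a b|
         <= C * M ^+ 3 * (knorm R ka `^ (2 - s) + knorm R ka `^ (6 - 3 * s)))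
    /\ (2 < s -> forall (a : {fset vec}), a \in OrbN N ->
          \sum_(b <- OrbN N) `|Mab N u a b| <= C * M ^+ 3)
    /\ (s <= 2 -> forall (a : {fset vec}), a \in OrbN N ->
          \sum_(b <- OrbN N) `|Mab N u a b| <= C * M ^+ 3 * (N%:R `^ (6 - 3 * s))).
Proof.
move=> /andP[hs1 hs2]; have s1 : 1 <= s by lra.
exists 18; split; first by lra.
move=> M M0 N N1 u _ hdf _ HM.
have M3 : 0 <= M ^+ 3 by rewrite exprn_ge0.
have rep : forall a, a \in OrbN N -> exists2 ka, ka \in a & 1 <= knorm R ka.
  move=> a ha; have [k0 hk0 ea] := OrbN_mem _ _ ha.
  have hk : k0 \in a by rewrite ea mem_orbit_self.
  by exists k0 => //; apply: knorm_ge1; exact: orbit_nz ha hk.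
split; [|split].
- move=> a ha ka hka; apply: le_trans (@core R s u M N a ka s1 M0 hdf HM ha hka) _.
  have X0 := powR_ge0 (knorm R ka) (2 - s); have Y0 := powR_ge0 (knorm R ka) (6 - 3 * s).
  move: X0 Y0; set X := knorm R ka `^ _; set Y := knorm R ka `^ _ => X0 Y0.
  have : 0 <= M ^+ 3 * X by exact: mulr_ge0.
  have : 0 <= M ^+ 3 * Y by exact: mulr_ge0.
  move: M3; set m := M ^+ 3 => M3 h1 h2; nra.
- move=> s2 a ha; have [ka hka K1] := rep a ha.
  apply: le_trans (@core R s u M N a ka s1 M0 hdf HM ha hka) _.
  have hX : knorm R ka `^ (2 - s) <= 1.
    have e : 2 - s <= 0 by lra.
    by have := ler_powR K1 e; rewrite powRr0.
  have X0 := powR_ge0 (knorm R ka) (2 - s).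
  move: hX X0 M3; set X := knorm R ka `^ _; set m := M ^+ 3 => hX X0 M3; nra.
- move=> s2 a ha; have [ka hka K1] := rep a ha.
  apply: le_trans (@core R s u M N a ka s1 M0 hdf HM ha hka) _.
  have N1' : 1 <= (N%:R : R) by rewrite ler1n.
  have hK := knorm_le R _ _ _ ha hka.
  have h1 : knorm R ka `^ (2 - s) <= (2 * N%:R) `^ (2 - s).
    apply: ge0_ler_powR => //; first by lra.
      by rewrite nnegrE; exact: knorm_ge0.
    by rewrite nnegrE mulr_ge0 ?ler0n.
  rewrite powRM ?ler0n // in h1.
  have h2 : (2 : R) `^ (2 - s) <= 2.
    rewrite -[X in _ <= X](powRr1 (_ : 0 <= (2 : R))) //; apply: ler_powR => //; lra.
  have h3 : (N%:R : R) `^ (2 - s) <= N%:R `^ (6 - 3 * s) by apply: ler_powR => //; lra.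
  have X0 := powR_ge0 (knorm R ka) (2 - s).
  have A0 := powR_ge0 (2 : R) (2 - s); have B0 := powR_ge0 (N%:R : R) (2 - s).
  move: h1 h2 h3 X0 A0 B0 M3.
  set X := knorm R ka `^ _; set A := (2 : R) `^ _; set B := (N%:R : R) `^ (2 - s).
  set Y := (N%:R : R) `^ _; set m := M ^+ 3 => h1 h2 h3 X0 A0 B0 M3.
  have hAB : A * B <= 2 * Y.
    apply: le_trans (ler_wpM2r B0 h2) _; lra.
  have : X <= 2 * Y by lra.
  move=> hXY; have := ler_wpM2l M3 hXY; nra.
Qed.
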